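(* Let $\varphi$ be a $k$-CNF formula with $m$ clauses in which each variable appears in at most $d$ clauses, and suppose $\varphi$ is extremal. If $d\le \frac{2^k}{ek}+1$, then the following algorithm outputs a uniformly random satisfying assignment of $\varphi$, with $O(m)$ expected total number of resampled clauses: assign each variable an independent uniformly random truth value; while at least one clause is unsatisfied, simultaneously resample independently and uniformly all variables occurring in all currently unsatisfied clauses; output the current assignment.
   Context: A $k$-CNF formula is a conjunction of clauses, each a disjunction of exactly $k$ literals. The formula is extremal if for every two clauses $C_i,C_j$ that share a variable, there is some variable $x$ appearing in both $C_i$ and $C_j$ with one occurrence positive and the other negative. *)

(* Defs.v *)
From HB Require Import structures.
From mathcomp Require Import all_boot all_order all_algebra.
From mathcomp Require Import all_classical all_reals all_analysis.
Set Implicit Arguments. Unset Strict Implicit. Unset Printing Implicit Defensive.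
Import Order.TTheory GRing.Theory Num.Theory.
Local Open Scope ring_scope.

(* A literal over variables 'I_n is a pair (x, b): b = true means the positive
   literal x, b = false the negative literal ~x. *)

Section CNF.
Variables (n m k : nat) (phi : 'I_m -> k.-tuple ('I_n * bool)).

Definition lit_true (s : {ffun 'I_n -> bool}) (l : 'I_n * bool) : bool :=
  s l.1 == l.2.

Definition clause_sat (s : {ffun 'I_n -> bool}) (i : 'I_m) : bool :=
  has (lit_true s) (phi i).

Definition satisfies (s : {ffun 'I_n -> bool}) : bool :=
  [forall i, clause_sat s i].

Definition cvars (i : 'I_m) : {set 'I_n} :=
  [set x | has (fun l : 'I_n * bool => l.1 == x) (phi i)].

Definition is_kCNF : Prop := forall i, uniq (map fst (phi i)).

Definition max_occurrence (d : nat) : Prop :=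
  forall x : 'I_n, (#|[set i | x \in cvars i]| <= d)%N.

Definition extremal : Prop :=
  forall i j : 'I_m, i != j -> (exists x, (x \in cvars i) && (x \in cvars j)) ->
    exists (x : 'I_n) (b : bool), ((x, b) \in (phi i : seq _)) /\ ((x, ~~ b) \in (phi j : seq _)).

Definition unsat (s : {ffun 'I_n -> bool}) : {set 'I_m} :=
  [set i | ~~ clause_sat s i].

Definition resample_vars (s : {ffun 'I_n -> bool}) : {set 'I_n} :=
  \bigcup_(i in unsat s) cvars i.

Variable R : realType.

(* When s is satisfying this is the identity,
   i.e. the algorithm has stopped and its output stays s forever. *)
Definition step_kernel (s t : {ffun 'I_n -> bool}) : R :=
  if [forall x, (x \notin resample_vars s) ==> (t x == s x)]
  then (2%:R ^+ #|resample_vars s|)^-1 else 0.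

Fixpoint state_law (r : nat) (t : {ffun 'I_n -> bool}) : R :=
  match r with
  | 0 => (2%:R ^+ n)^-1
  | r'.+1 => \sum_(s : {ffun 'I_n -> bool}) state_law r' s * step_kernel s t
  end.

Definition expected_resampled (T : nat) : R :=
  \sum_(r < T) \sum_(s : {ffun 'I_n -> bool}) state_law r s * (#|unsat s|)%:R.

Definition num_sat : nat := #|[set s | satisfies s]|.

End CNF.

(* Main.v *)
Require Import Defs.
From HB Require Import structures.
From mathcomp Require Import all_boot all_order all_algebra.
From mathcomp Require Import reals.
From mathcomp Require Import ring lra zify.
Import Order.TTheory GRing.Theory Num.Theory.
Local Open Scope ring_scope.
Set Implicit Arguments. Unset Strict Implicit. Unset Printing Implicit Defensive.


Lemma uniq_map_eq (T1 T2 : eqType) (f : T1 -> T2) (s : seq T1) a b :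
  uniq (map f s) -> a \in s -> b \in s -> f a = f b -> a = b.
Proof.
elim: s => //= c s IH /andP[nc us]; rewrite !inE.
case/orP=> [/eqP->|ha]; case/orP=> [/eqP->|hb] //.
- move=> E; case/negP: nc; rewrite E; apply/mapP; by exists b.
- move=> E; case/negP: nc; rewrite -E; apply/mapP; by exists a.
- exact: IH.
Qed.
Section Main.
Variables (n m k d : nat) (phi : 'I_m -> k.-tuple ('I_n * bool)).
Hypotheses (k0 : (0 < k)%N) (hk : is_kCNF phi) (hd : max_occurrence phi d)
  (hext : extremal phi).

Local Notation st := {ffun 'I_n -> bool}.
Local Notation I := (unsat phi).
Local Notation cv := (cvars phi).

Lemma cvarsP i z : reflect (exists b, (z, b) \in (phi i : seq _)) (z \in cv i).
Proof.
rewrite /cvars inE; apply: (iffP hasP) => [[[z' b] hl /= /eqP <-]|[b hb]].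
  by exists b.
by exists (z, b).
Qed.

Lemma sat_local (s t : st) i : {in cv i, s =1 t} -> clause_sat phi s i = clause_sat phi t i.
Proof.
move=> H; rewrite /clause_sat; apply: eq_in_has => -[z b] hl.
by rewrite /lit_true /= H //; apply/cvarsP; exists b.
Qed.

Lemma unsat_lit (s : st) i z b : ~~ clause_sat phi s i -> (z, b) \in (phi i : seq _) -> s z = ~~ b.
Proof.
move=> /hasPn H /H; rewrite /lit_true /=.
by case: (s z); case: b.
Qed.

Lemma ext_sat (s : st) i j : i != j -> ~~ [disjoint cv i & cv j] ->
  ~~ clause_sat phi s i -> clause_sat phi s j.
Proof.
move=> nij nd ui.
have ex : exists z, (z \in cv i) && (z \in cv j).
  move: nd; rewrite -setI_eq0 => /set0Pn[z]; rewrite inE => hz; by exists z.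
have [z [b [h1 h2]]] := hext nij ex.
apply/hasP; exists (z, ~~ b) => //; rewrite /lit_true /=.
by rewrite (unsat_lit ui h1).
Qed.

Lemma unsatE (s : st) i : (i \in I s) = ~~ clause_sat phi s i.
Proof. by rewrite inE. Qed.

Lemma cv_neq0 i : exists z, z \in cv i.
Proof.
have := size_tuple (phi i).
have : forall l, l \in tval (phi i) -> l.1 \in cv i.
  move=> [z b] h; apply/cvarsP; by exists b.
case: (tval (phi i)) => [|l s] H hs.
  by exfalso; move: (k0); rewrite -hs.
exists l.1; apply: H; exact: mem_head.
Qed.

Definition V (J : {set 'I_m}) : {set 'I_n} := \bigcup_(i in J) cv i.
Definition Gp (J : {set 'I_m}) : {set 'I_m} :=
  [set j | [exists i in J, ~~ [disjoint cv i & cv j]]].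
Definition Sc J := ~: Gp J.

Lemma subGp (J : {set 'I_m}) : J \subset Gp J.
Proof.
apply/subsetP=> i hi; rewrite inE; apply/existsP; exists i; rewrite hi /=.
have [z hz] := cv_neq0 i.
by rewrite -setI_eq0 setIid; apply/set0Pn; exists z.
Qed.

Lemma Sc_avoid (J : {set 'I_m}) c z : c \in Sc J -> z \in cv c -> z \notin V J.
Proof.
rewrite inE inE negb_exists => /forallP H hz; apply/bigcupP => -[i hi hzi].
move: (H i); rewrite hi /= negbK -setI_eq0 => /eqP /setP /(_ z).
by rewrite in_setI hzi hz in_set0.
Qed.

Lemma agree_Sc (J : {set 'I_m}) (X Y : st) : (forall z, z \notin V J -> X z = Y z) ->
  I X :&: Sc J = I Y :&: Sc J.
Proof.
move=> H; apply/setP => c; rewrite !in_setI /Sc !in_setC.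
case hc: (c \in Gp J); rewrite ?andbF //= !andbT !unsatE.
congr negb; apply: sat_local => z hz; apply: H; apply: (@Sc_avoid J c) => //.
by rewrite in_setC hc.
Qed.

Lemma fals_eq (J : {set 'I_m}) (s1 Y : st) : J \subset I s1 ->
  (J \subset I Y) = [forall z in V J, Y z == s1 z].
Proof.
move=> /subsetP hs1; apply/subsetP/forall_inP => [H z /bigcupP[i hi /cvarsP[b hb]]|H i hi].
  have u1 := hs1 i hi; have u2 := H i hi; rewrite unsatE in u1; rewrite unsatE in u2.
  by rewrite (unsat_lit u1 hb) (unsat_lit u2 hb).
have := hs1 i hi; rewrite !unsatE => u1; rewrite (@sat_local Y s1) //.
move=> z hz; apply/eqP/H; apply/bigcupP; by exists i.
Qed.

Lemma decomp (J : {set 'I_m}) (X : st) : J \subset I X -> I X = J :|: (I X :&: Sc J).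
Proof.
move=> /subsetP hJ; apply/setP => c; rewrite in_setU in_setI /Sc in_setC.
case hcJ: (c \in J); first by rewrite /= hJ.
case hu: (c \in I X) => //=; apply/esym/negP; rewrite inE => /existsP[i /andP[hi hnd]].
have hic : i != c by apply/eqP => E; rewrite E hcJ in hi.
have := @ext_sat X i c hic hnd; rewrite -unsatE => /(_ (hJ i hi)).
by rewrite -[clause_sat _ _ _]negbK -unsatE hu.
Qed.

Lemma JScJ (J : {set 'I_m}) : J :&: Sc J = set0.
Proof.
apply/setP => c; rewrite in_setI in_set0 /Sc in_setC; case hc: (c \in J) => //=.
by rewrite (subsetP (subGp J)).
Qed.

Definition ov (J : {set 'I_m}) (s1 t : st) : st := [ffun z => if z \in V J then s1 z else t z].

Lemma ov_unsat (J : {set 'I_m}) (s1 t : st) : J \subset I s1 -> I (ov J s1 t) = J :|: (I t :&: Sc J).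
Proof.
move=> h1.
have hJ : J \subset I (ov J s1 t).
  by rewrite (fals_eq _ h1); apply/forall_inP => z hz; rewrite ffunE hz.
rewrite {1}(decomp hJ); congr (_ :|: _); apply: agree_Sc => z hz.
by rewrite ffunE (negbTE hz).
Qed.

Variable R : realType.

Lemma sumb_card (T : finType) (P : pred T) :
  \sum_(x : T) (P x)%:R = (#|[set x | P x]|)%:R :> R.
Proof.
rewrite -sum1_card natr_sum [RHS]big_mkcond /=; apply: eq_bigr => x _; rewrite inE.
by case: (P x).
Qed.

Definition agree (X Y : st) (W : {set 'I_n}) :=
  [forall z, (z \notin W) ==> (X z == Y z)].

Definition flip (Y : st) (A : {set 'I_n}) : st := [ffun z => Y z (+) (z \in A)].

Lemma card_agree (Y : st) W : \sum_(X : st) (agree X Y W)%:R = 2 ^+ #|W| :> R.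
Proof.
rewrite sumb_card.
have -> : [set X | agree X Y W] = flip Y @: powerset W.
  apply/setP => X; rewrite inE; apply/idP/imsetP => [/forallP H|[A hA ->]].
    exists [set z | X z != Y z].
      rewrite powersetE; apply/subsetP => z; rewrite inE => hz.
      apply/negPn/negP => hzW; have := H z; rewrite hzW /= => /eqP E.
      by rewrite E eqxx in hz.
    apply/ffunP => z; rewrite !ffunE inE.
    by case: (X z); case: (Y z).
  apply/forallP => z; apply/implyP => hz; rewrite ffunE.
  rewrite powersetE in hA.
  have -> : (z \in A) = false by apply/negP => /(subsetP hA); rewrite (negbTE hz).
  by rewrite addbF.
rewrite card_imset ?card_powerset ?natrX //.
move=> A B E; apply/setP => z; have := congr1 (fun f : st => f z) E; rewrite !ffunE.
by move/(congr1 (addb (Y z))); rewrite !addKb.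
Qed.

Lemma sum_pred1 (T : finType) (a : T) (F : T -> R) : \sum_(X : T) (X == a)%:R * F X = F a.
Proof.
rewrite (bigD1 a) //= eqxx mul1r big1 ?addr0 // => X /negbTE ->; by rewrite mul0r.
Qed.

Lemma fiber (J : {set 'I_m}) (s1 : st) (Q : pred {set 'I_m}) : J \subset I s1 ->
  \sum_(X : st) (Q (I X :&: Sc J))%:R =
  2 ^+ #|V J| * \sum_(X : st) ((J \subset I X) && Q (I X :&: Sc J))%:R :> R.
Proof.
move=> h1.
transitivity (\sum_(t : st) \sum_(X : st) ((X == ov J s1 t)%:R * (Q (I X :&: Sc J))%:R : R)).
  apply: eq_bigr => t _; rewrite (sum_pred1 _ (fun X => (Q (I X :&: Sc J))%:R)); congr ((Q _)%:R).
  by apply: agree_Sc => z hz; rewrite ffunE (negbTE hz).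
rewrite exchange_big big_distrr /=; apply: eq_bigr => X _.
rewrite -big_distrl /= -mulnb natrM mulrA; congr (_ * _).
rewrite (fals_eq _ h1).
case: (boolP [forall z in V J, X z == s1 z]) => H.
  rewrite /= mulr1 -(card_agree X (V J)); apply: eq_bigr => t _; congr ((nat_of_bool _)%:R).
  apply/idP/idP => [/eqP E|/forallP H2].
    by apply/forallP => z; apply/implyP => hz; rewrite E ffunE (negbTE hz).
  apply/eqP/ffunP => z; rewrite ffunE; case: ifP => hz.
    by apply/eqP; move/forall_inP: H; apply.
  by have := H2 z; rewrite hz /= => /eqP ->.
rewrite /= mulr0 big1 // => t _; case: eqP => // E; case/negP: H.
by apply/forall_inP => z hz; rewrite E ffunE hz.
Qed.

Definition N (S : {set 'I_m}) : R := \sum_(X : st) (I X :&: S == set0)%:R.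

Lemma setU_eqJ (J A : {set 'I_m}) : A \subset Sc J -> (J :|: A == J) = (A == set0).
Proof.
move=> hA; apply/eqP/eqP => [E|->]; last by rewrite setU0.
apply/setP => c; rewrite in_set0; apply/negbTE/negP => hc.
have h1 : c \in J by rewrite -E in_setU hc orbT.
have : c \in J :&: Sc J by rewrite in_setI h1 (subsetP hA).
by rewrite JScJ in_set0.
Qed.

Lemma class_count (J : {set 'I_m}) (s0 : st) : I s0 = J ->
  N (Sc J) = 2 ^+ #|V J| * \sum_(X : st) (I X == J)%:R.
Proof.
move=> h0; have h1 : J \subset I s0 by rewrite h0.
rewrite /N (fiber (fun A => A == set0) h1); congr (_ * _); apply: eq_bigr => X _.
congr ((nat_of_bool _)%:R).
case: (boolP (J \subset I X)) => hJ /=.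
  rewrite {2}(decomp hJ) eq_sym setU_eqJ //; exact: subsetIr.
apply/esym/negbTE; apply: contra hJ => /eqP ->; exact: subxx.
Qed.

Lemma kernel_class (J : {set 'I_m}) (s0 t : st) : I s0 = J ->
  \sum_(s : st) ((I s == J) && agree t s (V J))%:R = (I t :&: Sc J == set0)%:R :> R.
Proof.
move=> h0; have h1 : J \subset I s0 by rewrite h0.
rewrite -(sum_pred1 (ov J s0 t) (fun _ => (I t :&: Sc J == set0)%:R)).
apply: eq_bigr => s _; rewrite -natrM mulnb; congr ((nat_of_bool _)%:R).
case: (boolP (s == ov J s0 t)) => [/eqP ->|hs] /=.
  rewrite ov_unsat // setU_eqJ ?subsetIr // andb_idr // => _.
  by apply/forallP => z; apply/implyP => hz; rewrite ffunE (negbTE hz).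
apply/negbTE; apply: contra hs => /andP[/eqP hJ /forallP ha].
have hJ' : J \subset I s by rewrite hJ.
move: hJ'; rewrite (fals_eq _ h1) => /forall_inP hv.
apply/eqP/ffunP => z; rewrite ffunE; case: ifP => hz.
  by apply/eqP/hv.
by have := ha z; rewrite hz /= => /eqP ->.
Qed.

Definition Kp (s t : st) : R := (I t :&: Sc (I s) == set0)%:R / N (Sc (I s)).

Lemma sum_cond_b (P : pred st) (F : st -> R) :
  \sum_(s | P s) F s = \sum_s (P s)%:R * F s.
Proof. by rewrite big_mkcond; apply: eq_bigr => s _; case: (P s); rewrite ?mul1r ?mul0r. Qed.

Lemma stepB (f : st -> R) : (forall s s', I s = I s' -> f s = f s') -> forall t,
  \sum_s f s * step_kernel phi R s t = \sum_s f s * Kp s t.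
Proof.
move=> hf t.
rewrite (partition_big (fun s => I s) predT) //= [RHS](partition_big (fun s => I s) predT) //=.
apply: eq_bigr => J _.
case: (pickP (fun s => I s == J)) => [s0 /eqP h0|none]; last first.
  by rewrite !big_pred0 // => s; rewrite /= none.
rewrite (eq_bigr (fun s => f s0 * step_kernel phi R s t)); last first.
  by move=> s /eqP hs; rewrite (hf s s0) // hs h0.
rewrite [RHS](eq_bigr (fun s => f s0 * Kp s t)); last first.
  by move=> s /eqP hs; rewrite (hf s s0) // hs h0.
rewrite -!big_distrr /=; congr (_ * _).
transitivity (\sum_(s | I s == J) (agree t s (V J))%:R * (2 ^+ #|V J|)^-1 : R).
  apply: eq_bigr => s /eqP hs; rewrite /step_kernel.
  have -> : resample_vars phi s = V J by rewrite /resample_vars hs.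
  rewrite /agree; case: ifP => H /=; by rewrite ?H ?mul1r ?mul0r.
rewrite -big_distrl /= sum_cond_b.
rewrite (eq_bigr (fun s => ((I s == J) && agree t s (V J))%:R)); last first.
  by move=> s _; rewrite -natrM mulnb.
rewrite (kernel_class t h0).
rewrite (eq_bigr (fun s => (I t :&: Sc J == set0)%:R / N (Sc J))); last first.
  by move=> s /eqP hs; rewrite /Kp hs.
rewrite sum_cond_b -big_distrl /= (class_count h0).
set c := \sum_(X : st) _.
have c0 : c != 0.
  rewrite /c (bigD1 s0) //= h0 eqxx /=; apply: lt0r_neq0.
  apply: (@lt_le_trans _ _ 1); first exact: ltr01.
  rewrite lerDl; apply: sumr_ge0 => X _; exact: ler0n.
have e0 : (2 ^+ #|V J| : R) != 0 by rewrite expf_neq0 // pnatr_eq0.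
by rewrite invfM mulrCA [c * _]mulrCA divff // mulr1.
Qed.

Local Notation P := (state_law phi R).

Lemma law_class r s s' : I s = I s' -> P r s = P r s'.
Proof.
elim: r s s' => [//|r IH] s s' E /=.
rewrite !(stepB (IH)); apply: eq_bigr => u _; by rewrite /Kp E.
Qed.

Lemma law_step r t : P r.+1 t = \sum_s P r s * Kp s t.
Proof. by rewrite /= (stepB (law_class r)). Qed.

Lemma kernel_ge0 s t : 0 <= step_kernel phi R s t.
Proof.
rewrite /step_kernel; case: ifP => _ //; rewrite invr_ge0 exprn_ge0 //; exact: ler0n.
Qed.

Lemma law_ge0 r s : 0 <= P r s.
Proof.
elim: r s => [|r IH] s /=; first by rewrite invr_ge0 exprn_ge0 // ler0n.
by apply: sumr_ge0 => u _; rewrite mulr_ge0 ?kernel_ge0.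
Qed.

Lemma N_ge0 (S : {set 'I_m}) : 0 <= N S.
Proof. by apply: sumr_ge0 => X _; exact: ler0n. Qed.

Lemma sum_ge_term (F : st -> R) s0 : (forall s, 0 <= F s) -> F s0 <= \sum_s F s.
Proof.
move=> h; rewrite (bigD1 s0) //= lerDl; exact: sumr_ge0.
Qed.

Lemma N_self s : 0 < N (Sc (I s)).
Proof.
apply: (@lt_le_trans _ _ 1); first exact: ltr01.
have h : (I s :&: Sc (I s) == set0) by rewrite JScJ.
have H := @sum_ge_term (fun X => (I X :&: Sc (I s) == set0)%:R : R) s (fun X => ler0n _ _).
by rewrite /= h in H.
Qed.

Lemma Kp_sum s : \sum_t Kp s t = 1.
Proof.
rewrite /Kp -big_distrl /= divff //; apply: lt0r_neq0; exact: N_self.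
Qed.

Lemma Kp_ge0 s t : 0 <= Kp s t.
Proof. by rewrite /Kp mulr_ge0 ?ler0n // invr_ge0 N_ge0. Qed.

Lemma card_st : #|{: st}| = (2 ^ n)%N.
Proof. by rewrite card_ffun card_bool card_ord. Qed.

Lemma law_sum r : \sum_s P r s = 1.
Proof.
elim: r => [|r IH].
  rewrite /= sumr_const card_st -[_ *+ _]mulr_natr natrX mulVf //.
  by rewrite expf_neq0 // pnatr_eq0.
rewrite -[RHS]IH; under eq_bigr do rewrite law_step.
rewrite exchange_big /=; apply: eq_bigr => s _.
by rewrite -big_distrr /= Kp_sum mulr1.
Qed.

Definition A (u : 'I_m) (S : {set 'I_m}) : R :=
  \sum_(X : st) ((u \in I X) && (I X :&: S == set0))%:R.
Definition nbr u : {set 'I_m} := [set j | ~~ [disjoint cv u & cv j]].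
Definition D : R := (d.-1)%:R.

Lemma A_ge0 u (S : {set 'I_m}) : 0 <= A u S.
Proof. by apply: sumr_ge0 => X _; exact: ler0n. Qed.

Lemma setIU1_eq0 (B : {set 'I_m}) u (S : {set 'I_m}) :
  (B :&: (u |: S) == set0) = (u \notin B) && (B :&: S == set0).
Proof.
rewrite setIUr setU_eq0; congr andb.
by rewrite setI_eq0 disjoint_sym disjoints1.
Qed.

Lemma N_split u (S : {set 'I_m}) : N S = N (u |: S) + A u S.
Proof.
rewrite /N /A -big_split /=; apply: eq_bigr => X _.
rewrite setIU1_eq0 -natrD; congr (_%:R).
by case: (u \in I X); case: (_ == set0).
Qed.

Lemma A_reduce u (S : {set 'I_m}) : u \notin S -> A u S = A u (S :\: nbr u).
Proof.
move=> hu; apply: eq_bigr => X _; case hX: (u \in I X) => //=.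
have -> // : I X :&: S = I X :&: (S :\: nbr u).
apply/setP => j; rewrite !in_setI in_setD.
case hj: (j \in I X) => //=; case hjS: (j \in S); rewrite ?andbF //= andbT.
apply/esym/negP; rewrite inE => hn.
have hne : u != j by apply: contraNneq hu => ->.
have := @ext_sat X u j hne hn; rewrite -unsatE => /(_ hX).
by rewrite -[clause_sat _ _ _]negbK -unsatE hj.
Qed.

Definition fals u : st := [ffun z => ~~ has (fun l : 'I_n * bool => (l.1 == z) && l.2) (phi u)].

Lemma fals_unsat u : u \in I (fals u).
Proof.
rewrite unsatE; apply/hasPn => -[z b] hl; rewrite /lit_true /= ffunE.
case: b hl => hl.
  have -> // : has (fun l : 'I_n * bool => (l.1 == z) && l.2) (phi u).
  by apply/hasP; exists (z, true) => //=; rewrite eqxx.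
have -> // : has (fun l : 'I_n * bool => (l.1 == z) && l.2) (phi u) = false.
apply/negbTE/hasPn => -[z' b'] hl' /=; apply/negP => /andP[/eqP ez hb].
have := uniq_map_eq (hk u) hl hl'; rewrite /= ez => /(_ erefl) [] E.
by rewrite -E in hb.
Qed.

Lemma V1 u : V [set u] = cv u.
Proof. by rewrite /V big_set1. Qed.

Lemma card_cv u : #|cv u| = k.
Proof.
have -> : #|cv u| = #|[seq l.1 | l <- tval (phi u)]|.
  apply: eq_card => z; rewrite /cvars inE; apply/hasP/mapP => [[l hl /eqP <-]|[l hl ->]].
    by exists l.
  by exists l => //=.
by rewrite (card_uniqP (hk u)) size_map size_tuple.
Qed.

Lemma Gp1 u : Gp [set u] = nbr u.
Proof.
apply/setP => j; rewrite !inE; apply/existsP/idP => [[i /andP[]]|h].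
  by rewrite inE => /eqP ->.
by exists u; rewrite inE eqxx.
Qed.

Lemma A_indep u (S : {set 'I_m}) : S :&: nbr u = set0 -> A u S * 2 ^+ k = N S.
Proof.
move=> hS.
have hsub : S \subset Sc [set u].
  apply/subsetP => j hj; rewrite /Sc Gp1 in_setC; apply/negP => hn.
  have : j \in S :&: nbr u by rewrite in_setI hj hn.
  by rewrite hS in_set0.
have := fiber (fun B => B :&: S == set0) (s1 := fals u) (J := [set u]).
rewrite sub1set fals_unsat => /(_ erefl) E.
rewrite /N.
have -> : \sum_(X : st) (I X :&: S == set0)%:R =
   \sum_(X : st) (I X :&: Sc [set u] :&: S == set0)%:R :> R.
  apply: eq_bigr => X _; by rewrite -setIA (setIidPr hsub).
rewrite E V1 card_cv mulrC; congr (_ * _); apply: eq_bigr => X _.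
by rewrite sub1set -setIA (setIidPr hsub).
Qed.

Variable x : R.
Hypotheses (x0 : 0 < x) (hx2 : 2 * x <= 1 - D * x)
  (hp : (2 ^+ k)^-1 <= x * (1 - D * x) ^+ k.-1).

Lemma hDx : 0 <= 1 - D * x.
Proof. apply: le_trans hx2; by rewrite mulr_ge0 // ltW. Qed.

Lemma peel (b : nat)
  (IH : forall (S : {set 'I_m}) w, (#|S| < b)%N -> w \notin S ->
     (exists2 y, y \in cv w & forall j, j \in S -> y \notin cv j) -> A w S <= x * N S)
  u (L : seq 'I_n) : {subset L <= cv u} ->
  forall (S : {set 'I_m}), (#|S| <= b)%N -> u \notin S ->
  (forall j, j \in S -> j \in nbr u -> exists2 y, y \in L & y \in cv j) ->
  (1 - D * x) ^+ size L * N (S :\: nbr u) <= N S.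
Proof.
elim: L => [|y L IHL] hL S hS hu hcov.
  rewrite expr0 mul1r; have -> // : S :\: nbr u = S.
  apply/setP => j; rewrite in_setD; case hj: (j \in S); rewrite ?andbF // andbT.
  apply/negP => hn; by have [y] := hcov j hj hn.
set G := [set j in S | y \in cv j].
set S1 := S :\: G.
have hyu : y \in cv u by apply: hL; exact: mem_head.
have hG : G \subset nbr u.
  apply/subsetP => j; rewrite inE => /andP[_ hj]; rewrite inE -setI_eq0.
  by apply/set0Pn; exists y; rewrite in_setI hyu hj.
have hS1 : S1 :\: nbr u = S :\: nbr u.
  apply/setP => j; rewrite !in_setD; case hn: (j \in nbr u) => //=.
  case hjG: (j \in G) => //=.
  by rewrite (subsetP hG _ hjG) in hn.
have hS1S : S1 \subset S := subsetDl S G.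
have rec : (1 - D * x) ^+ size L * N (S :\: nbr u) <= N S1.
  rewrite -hS1; apply: IHL.
  - move=> z hz; apply: hL; by rewrite inE hz orbT.
  - exact: leq_trans (subset_leq_card hS1S) hS.
  - apply: contra hu; exact: (subsetP hS1S).
  - move=> j; rewrite /S1 in_setD => /andP[hjG hjS] hjn.
    have [z hz hzj] := hcov j hjS hjn.
    exists z => //; move: hz; rewrite inE => /orP[/eqP ez|] //.
    by move: hjG; rewrite inE hjS -ez hzj.
have U : N S1 <= N S + \sum_(w in G) A w S1.
  rewrite /N /A exchange_big /= -big_split /=; apply: ler_sum => X _.
  case h1: (I X :&: S1 == set0); last first.
    by rewrite /= addr_ge0 ?ler0n // sumr_ge0 // => w _; exact: ler0n.
  case h2: (I X :&: S == set0).
    by rewrite lerDl sumr_ge0 // => w _; exact: ler0n.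
  move/negbT: h2 => /set0Pn[j]; rewrite in_setI => /andP[hjX hjS].
  have hjG : j \in G.
    apply/negPn/negP => hn.
    have : j \in I X :&: S1 by rewrite in_setI hjX in_setD hn hjS.
    by rewrite (eqP h1) in_set0.
  rewrite (bigD1 j) //= hjX ?h1 /= add0r lerDl.
  by apply: sumr_ge0 => w _; exact: ler0n.
have hA : forall w, w \in G -> A w S1 <= x * N S1.
  move=> w hw; have hwS : w \in S by move: hw; rewrite inE => /andP[].
  apply: IH.
  - apply: leq_trans hS; apply: proper_card; rewrite properE hS1S /=.
    by apply/subsetPn; exists w => //; rewrite in_setD hw.
  - by rewrite in_setD hw.
  - exists y; first by move: hw; rewrite inE => /andP[].
    by move=> j; rewrite in_setD inE => /andP[]; rewrite negb_and => /orP[/negP|].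
have hcard : (#|G| <= d.-1)%N.
  have h1 : G \subset [set i | y \in cv i] :\ u.
    apply/subsetP => j; rewrite inE => /andP[hjS hyj]; rewrite in_setD1 inE hyj andbT.
    by apply: contraNneq hu => <-.
  apply: leq_trans (subset_leq_card h1) _.
  have hu1 : u \in [set i | y \in cv i] by rewrite inE.
  have := hd y; rewrite (cardsD1 u) hu1 /= => h.
  have d0 : (0 < d)%N by apply: leq_trans h.
  by rewrite -ltnS prednK.
have hsum : \sum_(w in G) A w S1 <= D * x * N S1.
  apply: le_trans (ler_sum _ hA) _; rewrite sumr_const -mulr_natl -mulrA.
  apply: ler_wpM2r; first by rewrite mulr_ge0 ?N_ge0 // ltW.
  by rewrite ler_nat.
have key : (1 - D * x) * N S1 <= N S.
  have -> : (1 - D * x) * N S1 = N S1 - D * x * N S1 by ring.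
  lra.
rewrite /= exprS -mulrA; apply: (le_trans _ key); exact: ler_wpM2l hDx _ _ rec.
Qed.

Lemma cv_map w z : (z \in cv w) = (z \in [seq l.1 | l <- tval (phi w)]).
Proof.
rewrite /cvars inE; apply/hasP/mapP => [[l hl /eqP <-]|[l hl ->]].
  by exists l.
by exists l => //=.
Qed.

Lemma nbr_share j w : j \in nbr w -> exists2 z, z \in cv w & z \in cv j.
Proof.
rewrite inE -setI_eq0 => /set0Pn[z]; rewrite in_setI => /andP[h1 h2]; by exists z.
Qed.

Lemma Sp_nbr w (S : {set 'I_m}) : (S :\: nbr w) :&: nbr w = set0.
Proof.
apply/setP => j; rewrite in_setI in_setD in_set0; by case: (j \in nbr w); rewrite ?andbF.
Qed.

Lemma A_div w (S : {set 'I_m}) : A w (S :\: nbr w) = N (S :\: nbr w) * (2 ^+ k)^-1.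
Proof.
by rewrite -(A_indep (Sp_nbr w S)) mulfK // expf_neq0 // pnatr_eq0.
Qed.

Lemma claim b : forall (S : {set 'I_m}) w, (#|S| < b)%N -> w \notin S ->
  (exists2 y, y \in cv w & forall j, j \in S -> y \notin cv j) -> A w S <= x * N S.
Proof.
elim: b => // b IHb S w hS hw [y hy hyS].
set L := [seq z <- [seq l.1 | l <- tval (phi w)] | z != y].
have hsz : size L = k.-1.
  rewrite size_filter.
  have := count_predC (pred1 y) [seq l.1 | l <- tval (phi w)].
  rewrite count_uniq_mem ?(hk w) // -cv_map hy size_map size_tuple /= => E.
  by rewrite -[X in X.-1]E add1n.
have hpeel := @peel b IHb w L _ S hS hw.
have hpeel' : (1 - D * x) ^+ k.-1 * N (S :\: nbr w) <= N S.
  rewrite -hsz; apply: hpeel.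
  - by move=> z; rewrite mem_filter cv_map => /andP[].
  - move=> j hjS hjn; have [z hz hzj] := nbr_share hjn.
    exists z => //; rewrite mem_filter -cv_map hz andbT.
    by apply: contraNneq (hyS j hjS) => <-.
rewrite (A_reduce hw) A_div.
apply: (@le_trans _ _ (N (S :\: nbr w) * (x * (1 - D * x) ^+ k.-1))).
  by apply: ler_wpM2l; [exact: N_ge0|exact: hp].
rewrite mulrCA; apply: ler_wpM2l; [exact: ltW|].
by rewrite mulrC.
Qed.

Lemma root (S : {set 'I_m}) w : w \notin S -> (1 - D * x) * A w S <= x * N S.
Proof.
move=> hw.
have hpeel : (1 - D * x) ^+ k * N (S :\: nbr w) <= N S.
  rewrite -(size_tuple (phi w)) -(size_map (fun l : 'I_n * bool => l.1)).
  apply: (@peel #|S| (fun S0 w0 => @claim #|S| S0 w0)) => //.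
  - by move=> z; rewrite cv_map.
  - move=> j hjS hjn; have [z hz hzj] := nbr_share hjn.
    by exists z; rewrite // -cv_map.
rewrite (A_reduce hw) A_div.
apply: (@le_trans _ _ ((1 - D * x) * (N (S :\: nbr w) * (x * (1 - D * x) ^+ k.-1)))).
  apply: ler_wpM2l; first exact: hDx.
  by apply: ler_wpM2l; [exact: N_ge0|exact: hp].
have -> : (1 - D * x) * (N (S :\: nbr w) * (x * (1 - D * x) ^+ k.-1)) =
   x * ((1 - D * x) ^+ k.-1.+1 * N (S :\: nbr w)) by rewrite exprS; ring.
rewrite prednK //; apply: ler_wpM2l => //; exact: ltW.
Qed.

Lemma A_half (S : {set 'I_m}) w : w \notin S -> 2 * A w S <= N S.
Proof.
move=> hw; have h := root hw.
have h2 : 2 * x * A w S <= (1 - D * x) * A w S by apply: ler_wpM2r => //; exact: A_ge0.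
rewrite -(ler_pM2l x0); apply: le_trans h.
by rewrite mulrA [x * 2]mulrC.
Qed.

Lemma N_pos_aux c : forall S : {set 'I_m}, #|S| = c -> 0 < N S.
Proof.
elim: c => [|c IH] S hS.
  move/cards0_eq: hS => ->; rewrite /N (eq_bigr (fun _ => 1)) => [|X _]; last first.
    by rewrite setI0 eqxx.
  by rewrite sumr_const card_st -mulr_natr mul1r ltr0n expn_gt0.
have [u hu] : exists u, u \in S.
  by apply/set0Pn; rewrite -card_gt0 hS.
have hS0 : #|S :\ u| = c by move: hS; rewrite (cardsD1 u) hu add1n => -[].
have hu0 : u \notin S :\ u by rewrite setD11.
have h1 := N_split u (S :\ u); rewrite setD1K // in h1.
have h2 := A_half hu0; have h3 := IH _ hS0.
lra.
Qed.

Lemma N_pos (S : {set 'I_m}) : 0 < N S.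
Proof. exact: (@N_pos_aux #|S|). Qed.

Definition N1 (S : {set 'I_m}) : R := \sum_(X : st) (#|I X :&: S| == 1)%N%:R.

Lemma N1_ge0 S : 0 <= N1 S.
Proof. by apply: sumr_ge0 => X _; exact: ler0n. Qed.

Lemma A_le_N (S : {set 'I_m}) w : w \in S -> A w (S :\ w) <= N S.
Proof.
move=> hw; have h1 := N_split w (S :\ w); rewrite setD1K // in h1.
have h2 : w \notin S :\ w by rewrite setD11.
have := A_half h2; lra.
Qed.

Lemma N1_le (S : {set 'I_m}) : N1 S <= m%:R * N S.
Proof.
apply: (@le_trans _ _ (\sum_(w in S) A w (S :\ w))).
  rewrite /N1 /A exchange_big /=; apply: ler_sum => X _.
  case: (boolP (#|I X :&: S| == 1)%N) => [/cards1P[w hw]|_]; last first.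
    by rewrite /= sumr_ge0 // => w _; exact: ler0n.
  have hwIS : w \in I X :&: S by rewrite hw set11.
  move: (hwIS); rewrite in_setI => /andP[hwX hwS].
  rewrite (bigD1 w) //= hwX.
  have -> : I X :&: (S :\ w) == set0.
    by rewrite setIDA hw setDv.
  by rewrite lerDl sumr_ge0 // => w' _; exact: ler0n.
apply: (@le_trans _ _ (\sum_(w in S) N S)).
  by apply: ler_sum => w hw; exact: A_le_N.
rewrite sumr_const -[_ *+ _]mulr_natl.
apply: ler_wpM2r; first exact: ltW (N_pos S).
rewrite ler_nat; apply: leq_trans (max_card _) _; by rewrite card_ord.
Qed.

Definition pot (s : st) : R := N1 (Sc (I s)) / N (Sc (I s)).

Lemma IScJ (X : st) (J : {set 'I_m}) : J \subset I X -> I X :&: Sc J = I X :\: J.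
Proof.
move=> hJ; apply/setP => c; rewrite in_setI in_setD.
case hcJ: (c \in J) => /=.
  by rewrite /Sc in_setC (subsetP (subGp J)) // andbF.
apply/andP/idP => [[]//|hc]; split => //.
move: hc; rewrite {1}(decomp hJ) in_setU hcJ /= in_setI => /andP[].
by [].
Qed.

Lemma realize (J : {set 'I_m}) (X : st) : J \subset I X -> exists s, I s = J.
Proof.
move=> hJ.
case: (pickP (fun t => I t :&: Sc J == set0)) => [t ht|H]; last first.
  have := N_pos (Sc J); rewrite /N big1 ?ltxx // => t _.
  by rewrite H.
exists (ov J X t); rewrite ov_unsat //.
by rewrite (eqP ht) setU0.
Qed.

Lemma class_pot (J : {set 'I_m}) (s0 : st) : I s0 = J ->
  (\sum_(X : st) (I X == J)%:R) * (N1 (Sc J) / N (Sc J)) =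
  \sum_(X : st) ((J \subset I X) && (#|I X :&: Sc J| == 1)%N)%:R.
Proof.
move=> h0; have h1 : J \subset I s0 by rewrite h0.
rewrite (class_count h0) /N1 (fiber (fun B => #|B| == 1)%N h1).
set c := \sum_(X : st) (I X == J)%:R.
set M := \sum_(X : st) _.
have e0 : (2 ^+ #|V J| : R) != 0 by rewrite expf_neq0 // pnatr_eq0.
have c0 : c != 0.
  rewrite /c (bigD1 s0) //= h0 eqxx /=; apply: lt0r_neq0.
  apply: (@lt_le_trans _ _ 1); first exact: ltr01.
  rewrite lerDl; apply: sumr_ge0 => X _; exact: ler0n.
by field; apply/andP; split.
Qed.

Lemma sum_pred1' (T : finType) (a : T) (F : T -> R) : \sum_(X : T) (X == a)%:R * F a = F a.
Proof. exact: (sum_pred1 a (fun _ => F a)). Qed.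

Lemma sum_pot_J (S : {set 'I_m}) :
  \sum_(t : st) (I t :&: S == set0)%:R * pot t =
  \sum_(J : {set 'I_m}) (J :&: S == set0)%:R *
     \sum_(X : st) ((J \subset I X) && (#|I X :&: Sc J| == 1)%N)%:R.
Proof.
rewrite (partition_big (fun t => I t) predT) //=; apply: eq_bigr => J _.
case: (pickP (fun t => I t == J)) => [s0 /eqP h0|none].
  rewrite (eq_bigr (fun t => (J :&: S == set0)%:R * (N1 (Sc J) / N (Sc J)))); last first.
    by move=> t /eqP ht; rewrite /pot ht.
  rewrite -big_distrr /=; congr (_ * _).
  by rewrite -(class_pot h0) sum_cond_b -big_distrl.
rewrite big_pred0; last by move=> t /=; rewrite none.
rewrite big1 ?mulr0 // => X _.
case: (boolP (J \subset I X)) => //= hJ.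
by have [s hs] := realize hJ; have := none s; rewrite hs eqxx.
Qed.

Lemma reindex_J (X : st) (S : {set 'I_m}) :
  \sum_(J : {set 'I_m}) (J :&: S == set0)%:R * ((J \subset I X) && (#|I X :&: Sc J| == 1)%N)%:R
  = \sum_(i in I X) ((I X :\ i) :&: S == set0)%:R :> R.
Proof.
set B := I X.
have E : forall J : {set 'I_m}, ((J \subset B) && (#|B :&: Sc J| == 1)%N) = ((J \subset B) && (#|B :\: J| == 1)%N).
  move=> J; case: (boolP (J \subset B)) => //= hJ; by rewrite IScJ.
transitivity (\sum_(J : {set 'I_m}) \sum_(i in B) ((J == B :\ i)%:R * ((B :\ i) :&: S == set0)%:R : R)).
  apply: eq_bigr => J _; rewrite E.
  case: (boolP ((J \subset B) && (#|B :\: J| == 1)%N)) => [/andP[hJ /cards1P[i0 hi0]]|hn].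
    have hi0B : i0 \in B :\: J by rewrite hi0 set11.
    move: (hi0B); rewrite in_setD => /andP[hi0J hiB].
    have hJeq : J = B :\ i0.
      apply/setP => c; rewrite in_setD1; case hcJ: (c \in J).
        rewrite (subsetP hJ) // andbT; apply/esym/eqP => hc; by rewrite -hc hcJ in hi0J.
      case hcB: (c \in B); rewrite ?andbF //= andbT.
      have : c \in B :\: J by rewrite in_setD hcJ hcB.
      by rewrite hi0 in_set1 => ->.
    rewrite (bigD1 i0) //= -hJeq eqxx mul1r big1 ?addr0 ?mulr1 // => i /andP[hiB' hne].
    case: eqP => [E2|]; last by rewrite mul0r.
    have : i0 \in J by rewrite E2 in_setD1 eq_sym hne hiB.
    move=> h; by rewrite h in hi0J.
  rewrite mulr0 big1 // => i hiB; case: eqP => [E2|]; last by rewrite mul0r.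
  case/negP: hn; rewrite E2 subD1set /=.
  have -> : B :\: (B :\ i) = [set i].
    apply/setP => c; rewrite in_setD in_setD1 in_set1.
    case: (eqVneq c i) => [->|hne] /=; first by rewrite hiB.
    by rewrite andNb.
  by rewrite cards1.
rewrite exchange_big /=; apply: eq_bigr => i _.
exact: (sum_pred1' (B :\ i) (fun _ => ((B :\ i) :&: S == set0)%:R)).
Qed.

Lemma count_i (B S : {set 'I_m}) :
  \sum_(i in B) ((B :\ i) :&: S == set0)%:R =
  (B :&: S == set0)%:R * #|B|%:R + (#|B :&: S| == 1)%N%:R :> R.
Proof.
have E : forall i, ((B :\ i) :&: S == set0) = (B :&: S \subset [set i]).
  by move=> i; rewrite setIDAC setD_eq0.
under eq_bigr do rewrite E.
case: (boolP (B :&: S == set0)) => [/eqP h0|h0].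
  rewrite h0 cards0 /= mul1r addr0 (eq_bigr (fun _ => 1)) => [|i _]; last by rewrite sub0set.
  by rewrite sumr_const.
rewrite /= mul0r add0r.
case: (boolP (#|B :&: S| == 1)%N) => [/cards1P[a ha]|h1].
  have haBS : a \in B :&: S by rewrite ha set11.
  move: (haBS); rewrite in_setI => /andP[haB _].
  rewrite ha (bigD1 a) //= sub1set in_set1 eqxx big1 ?addr0 // => i /andP[_ hne].
  by rewrite sub1set in_set1 eq_sym (negbTE hne).
rewrite big1 // => i _; apply/eqP; rewrite pnatr_eq0 eqb0; apply/negP => hsub.
have := subset_leq_card hsub; rewrite cards1 => hle.
have : (0 < #|B :&: S|)%N by rewrite card_gt0.
move: h1; case: #|B :&: S| hle => [|[|c]] //.
Qed.

Lemma KCI (S : {set 'I_m}) :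
  \sum_(t : st) (I t :&: S == set0)%:R * (#|I t|%:R - pot t) = - N1 S.
Proof.
under eq_bigr do rewrite mulrBr.
rewrite sumrB sum_pot_J.
under [X in _ - X]eq_bigr do rewrite big_distrr.
rewrite [X in _ - X]exchange_big /=.
under [X in _ - X]eq_bigr do rewrite reindex_J count_i.
by rewrite big_split /= opprD addrA subrr add0r.
Qed.

Definition Ex r := \sum_(s : st) P r s * #|I s|%:R.
Definition Phi r := \sum_(s : st) P r s * pot s.

Lemma Kp_pot s : \sum_t Kp s t * (#|I t|%:R - pot t) = - pot s.
Proof.
rewrite /Kp /pot; under eq_bigr do rewrite mulrAC.
by rewrite -big_distrl /= KCI mulNr.
Qed.

Lemma Ex_step r : Ex r.+1 = Phi r.+1 - Phi r.
Proof.
have h : Ex r.+1 - Phi r.+1 = - Phi r.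
  rewrite /Ex /Phi -sumrB.
  under eq_bigr do rewrite -mulrBr law_step big_distrl /=.
  rewrite exchange_big /= -sumrN; apply: eq_bigr => s _.
  under eq_bigr do rewrite -mulrA.
  by rewrite -big_distrr /= Kp_pot mulrN.
lra.
Qed.

Lemma pot_ge0 s : 0 <= pot s.
Proof. by rewrite /pot divr_ge0 ?N1_ge0 ?N_ge0. Qed.

Lemma pot_le s : pot s <= m%:R.
Proof. by rewrite /pot ler_pdivrMr ?N_pos // N1_le. Qed.

Lemma Phi_ge0 r : 0 <= Phi r.
Proof. by apply: sumr_ge0 => s _; rewrite mulr_ge0 ?law_ge0 ?pot_ge0. Qed.

Lemma Phi_le r : Phi r <= m%:R.
Proof.
apply: (@le_trans _ _ (\sum_s P r s * m%:R)).
  by apply: ler_sum => s _; apply: ler_wpM2l; [exact: law_ge0|exact: pot_le].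
by rewrite -big_distrl /= law_sum mul1r.
Qed.

Lemma Ex_ge0 r : 0 <= Ex r.
Proof. by apply: sumr_ge0 => s _; rewrite mulr_ge0 ?law_ge0 ?ler0n. Qed.

Lemma Ex_le r : Ex r <= m%:R.
Proof.
apply: (@le_trans _ _ (\sum_s P r s * m%:R)).
  apply: ler_sum => s _; apply: ler_wpM2l; first exact: law_ge0.
  by rewrite ler_nat; apply: leq_trans (max_card _) _; rewrite card_ord.
by rewrite -big_distrl /= law_sum mul1r.
Qed.

Lemma sum_Ex_eq T : \sum_(r < T.+1) Ex r = Ex 0 + Phi T - Phi 0.
Proof.
elim: T => [|T IH]; first by rewrite big_ord1; ring.
by rewrite big_ord_recr /= IH Ex_step; ring.
Qed.

Lemma part3 T : expected_resampled phi R T <= (2 * m)%:R.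
Proof.
rewrite /expected_resampled -/(Ex _).
case: T => [|T]; first by rewrite big_ord0 ler0n.
rewrite sum_Ex_eq.
have := Ex_le 0; have := Phi_le T; have := Phi_ge0 0; rewrite natrM; lra.
Qed.

Lemma I_set0 s : satisfies phi s = (I s == set0).
Proof.
rewrite /satisfies; apply/idP/idP => [/forallP H|/eqP H].
  by apply/eqP/setP => i; rewrite unsatE H in_set0.
apply/forallP => i; have : i \notin I s by rewrite H in_set0.
by rewrite unsatE negbK.
Qed.

Lemma num_satE : (num_sat phi)%:R = N setT.
Proof.
rewrite /N (eq_bigr (fun X => (I X == set0)%:R)) => [|X _]; last by rewrite setIT.
rewrite sumb_card /num_sat; congr (_%:R); apply: eq_card => s; by rewrite !inE I_set0.
Qed.

Lemma part1 : (0 < num_sat phi)%N.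
Proof. by rewrite -(ltr0n R) num_satE N_pos. Qed.

Lemma kernel_self t : I t = set0 -> step_kernel phi R t t = 1.
Proof.
move=> ht; rewrite /step_kernel.
have hv : resample_vars phi t = set0 by rewrite /resample_vars ht big_set0.
rewrite hv cards0 expr0 invr1; case: ifP => // /negbT /forallPn [z].
by rewrite eqxx implybT.
Qed.

Lemma mono r t : I t = set0 -> P r t <= P r.+1 t.
Proof.
move=> ht; rewrite [P r.+1 t]/=.
have := @sum_ge_term (fun s => P r s * step_kernel phi R s t) t.
rewrite kernel_self // mulr1; apply => s; by rewrite mulr_ge0 ?law_ge0 ?kernel_ge0.
Qed.

Lemma mono_le r r' t : I t = set0 -> (r <= r')%N -> P r t <= P r' t.
Proof.
move=> ht; elim: r' => [|r' IH]; first by rewrite leqn0 => /eqP ->.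
rewrite leq_eqVlt => /orP[/eqP ->//|]; rewrite ltnS => h.
exact: le_trans (IH h) (mono _ ht).
Qed.

Lemma deficit_le r t : I t = set0 -> 1 - P r t * N setT <= Ex r.
Proof.
move=> ht; rewrite -(law_sum r) lerBlDl /N big_distrr /Ex -big_split /=.
apply: ler_sum => s _; rewrite setIT.
case hs: (I s == set0).
  by rewrite (law_class r (s' := t)) ?(eqP hs) // cards0 mulr0 addr0 mulr1.
rewrite mulr0 add0r -{1}[P r s]mulr1; apply: ler_wpM2l; first exact: law_ge0.
by rewrite ler1n card_gt0 hs.
Qed.

Lemma deficit_ge0 r t : I t = set0 -> P r t * N setT <= 1.
Proof.
move=> ht; rewrite -(law_sum r) /N big_distrr /=; apply: ler_sum => s _.
rewrite setIT; case hs: (I s == set0).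
  by rewrite mulr1 (law_class r (s' := s)) // (eqP hs).
by rewrite mulr0 law_ge0.
Qed.

Lemma part2_bound t : satisfies phi t -> forall r,
  `|(num_sat phi)%:R^-1 - P r t| <= (2 * m)%:R / (r.+1)%:R.
Proof.
rewrite I_set0 => /eqP ht r.
set c : R := (num_sat phi)%:R.
have c1 : 1 <= c by rewrite /c ler1n part1.
have c0 : 0 < c by apply: lt_le_trans c1; exact: ltr01.
set del := fun i => 1 - P i t * c.
have hdel : forall i, 0 <= del i <= Ex i.
  move=> i; rewrite /del /c num_satE subr_ge0 deficit_ge0 //=; exact: deficit_le.
have hmono : forall i, (i <= r)%N -> del r <= del i.
  move=> i hi; rewrite /del lerD2l lerN2; apply: ler_wpM2r; first exact: ltW.
  exact: mono_le.
have hsum : (r.+1)%:R * del r <= (2 * m)%:R.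
  apply: le_trans (part3 r.+1).
  rewrite /expected_resampled -/(Ex _).
  apply: (@le_trans _ _ (\sum_(i < r.+1) del i)).
    have -> : (r.+1)%:R * del r = \sum_(i < r.+1) del r by rewrite sumr_const card_ord mulr_natl.
    by apply: ler_sum => i _; apply: hmono; rewrite -ltnS.
  by apply: ler_sum => i _; have /andP[] := hdel i.
have E : c^-1 - P r t = del r / c.
  by rewrite /del mulrBl mul1r mulfK // lt0r_neq0.
have hd0 : 0 <= del r by case/andP: (hdel r).
rewrite E ger0_norm; last exact: divr_ge0 hd0 (ltW c0).
rewrite ler_pdivlMr ?ltr0n // mulrC.
apply: le_trans hsum; apply: ler_wpM2l; first exact: ler0n.
by rewrite ler_pdivrMr // -{1}[del r]mulr1; apply: ler_wpM2l.
Qed.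
End Main.

From mathcomp Require Import all_classical all_reals all_analysis.
Import numFieldNormedType.Exports.
Local Open Scope classical_set_scope.
Local Open Scope ring_scope.

Lemma e_gt2 (R : realType) : 2 < expR (1 : R).
Proof. by have := @expR_gt1Dx R 1 (oner_neq0 _); rewrite -(natrD R 1 1). Qed.

Lemma e_pow (R : realType) (j : nat) : (0 < j)%N -> (1 + (j%:R)^-1) ^+ j <= expR (1 : R).
Proof.
move=> j0.
have h1 : 1 + (j%:R)^-1 <= expR ((j%:R)^-1 : R) := expR_ge1Dx _.
have : (1 + (j%:R)^-1) ^+ j <= expR ((j%:R)^-1 : R) ^+ j.
  apply: lerXn2r => //; rewrite nnegrE.
    by rewrite addr_ge0 // invr_ge0 ler0n.
  exact: expR_ge0.
by rewrite -expRM_natr mulVf // pnatr_eq0 -lt0n.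
Qed.

Lemma choose_x (R : realType) (k d : nat) : (0 < k)%N ->
  (d%:R <= 2%:R ^+ k / (expR 1 * k%:R) + 1 :> R) ->
  exists x : R, [/\ 0 < x, 2 * x <= 1 - (d.-1)%:R * x &
     (2 ^+ k)^-1 <= x * (1 - (d.-1)%:R * x) ^+ k.-1].
Proof.
move=> k0 hd.
have e2 := e_gt2 R; set e := expR (1 : R) in hd e2 *.
have e0 : 0 < e by apply: lt_trans e2.
have p0 : (0 : R) < 2 ^+ k by rewrite exprn_gt0.
case: (leqP d 1) => hd1.
  have -> : d.-1 = 0%N by case: d hd hd1 => [|[|]].
  exists (2 ^+ k)^-1; split.
  - by rewrite invr_gt0.
  - rewrite mul0r subr0 ler_pdivrMr // mul1r.
    by rewrite -[X in X <= _]expr1 ler_eXn2l // ltr1n.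
  - by rewrite mul0r subr0 expr1n mulr1.
have hk3 : (3 <= k)%N.
  have h2e : 2 / e < 1 by rewrite ltr_pdivrMr // mul1r.
  have hd2 : 2 <= d%:R :> R by rewrite ler_nat.
  case: k k0 hd p0 => [|[|[|k']]] //= _ hd _; exfalso; move: hd; apply/negP; rewrite -ltNge.
  - rewrite expr1 mulr1; lra.
  - have -> : 2 ^+ 2 / (e * 2%:R) = 2 / e :> R.
      by field; rewrite lt0r_neq0.
    lra.
set j := k.-1.
have hkj : k = j.+1 by rewrite prednK.
have j0 : (0 < j)%N by rewrite /j -ltnS prednK // (leq_trans _ hk3).
set D := (d.-1)%:R : R.
set kr := k%:R : R.
have hkr : kr = j%:R + 1 by rewrite /kr hkj -natr1.
have kr3 : 3 <= kr by rewrite /kr ler_nat.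
have kr0 : 0 < kr by apply: lt_le_trans kr3; rewrite ltr0n.
have hdD : d%:R = D + 1 :> R by rewrite /D natr1 prednK // (leq_trans _ hd1).
have D1 : 1 <= D by rewrite /D ler1n -ltnS prednK // (leq_trans _ hd1).
have D0 : 0 < D by apply: lt_le_trans D1; exact: ltr01.
have hDd : D * (e * kr) <= 2 ^+ k.
  rewrite -ler_pdivlMr ?mulr_gt0 //; move: hd; rewrite hdD; lra.
exists (D * kr)^-1.
have hDx : D * (D * kr)^-1 = kr^-1.
  by rewrite invfM mulrA mulfV ?mul1r // lt0r_neq0.
rewrite hDx; split.
- by rewrite invr_gt0 mulr_gt0.
- have hx : (D * kr)^-1 <= kr^-1.
    rewrite invfM -{2}[kr^-1]mul1r; apply: ler_wpM2r; first by rewrite invr_ge0 ltW.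
    by rewrite invf_le1.
  have h3 : 3 * kr^-1 <= 1 by rewrite ler_pdivrMr // mul1r.
  lra.
- have q0 : 0 <= (1 - kr^-1) ^+ j.
    apply: exprn_ge0; rewrite subr_ge0 invf_le1 //; apply: le_trans kr3; by rewrite ler1n.
  have step1 : (2 ^+ k)^-1 <= (D * kr)^-1 / e.
    have -> : (D * kr)^-1 / e = (D * (e * kr))^-1.
      by rewrite -invfM -mulrA [kr * e]mulrC.
    by rewrite lef_pV2 // posrE ?mulr_gt0.
  apply: le_trans step1 _; apply: ler_wpM2l; first by rewrite invr_ge0 ltW // mulr_gt0.
  rewrite -[e^-1]mulr1 ler_pdivrMl //.
  have hprod : (1 + (j%:R)^-1) * (1 - kr^-1) = 1.
    rewrite hkr; field; rewrite pnatr_eq0 -lt0n j0 /=.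
    by apply/andP; split => //; rewrite lt0r_neq0 // addr_gt0 // ltr0n.
  apply: (@le_trans _ _ ((1 + (j%:R)^-1) ^+ j * (1 - kr^-1) ^+ j)).
    by rewrite -exprMn hprod expr1n.
  exact: ler_wpM2r q0 _ _ (e_pow _ j0).
Qed.
Theorem corollary20 :
  exists C : nat,
  forall (R : realType) (n m k d : nat) (phi : 'I_m -> k.-tuple ('I_n * bool)),
    (0 < k)%N ->
    is_kCNF phi ->
    max_occurrence phi d ->
    extremal phi ->
    (d%:R <= 2%:R ^+ k / (expR 1 * k%:R) + 1 :> R) ->
    [/\ (0 < num_sat phi)%N,
        (forall t : {ffun 'I_n -> bool}, satisfies phi t ->
           (fun r : nat => state_law phi R r t) @ \oo
             --> ((num_sat phi)%:R ^-1 : R))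
      & (forall T : nat, expected_resampled phi R T <= (C * m)%:R)].
Proof.
exists 2%N => R n m k d phi k0 hk hd hext hdk.
have [x [x0 hx2 hp]] := choose_x k0 hdk.
split.
- exact: (@part1 n m k d phi k0 hk hd hext R x x0 hx2 hp).
- move=> t ht; have B := @part2_bound n m k d phi k0 hk hd hext R x x0 hx2 hp t ht.
  apply/cvgrPdist_le => eps heps.
  apply: filterS (nbhs_infty_ger ((2 * m)%:R / eps)) => r hr.
  apply: le_trans (B r) _.
  rewrite ler_pdivrMr ?ltr0n // mulrC -ler_pdivrMr //.
  apply: le_trans hr _; rewrite ler_nat; exact: leqnSn.
- exact: (@part3 n m k d phi k0 hk hd hext R x x0 hx2 hp).
Qed.
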